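(* Let $\rho^{\textrm{sep}}$ be a separable state on $\mathbb{C}^d\otimes\mathbb{C}^d$ such that $\operatorname{Tr}(P_\mathcal{A} \rho^{\textrm{sep}})>0$. Then there is a separable state $\rho'^{\textrm{sep}}$ such that $\operatorname{Tr}(P_\mathcal{A} \rho'^{\textrm{sep}})=1/2$ and $\frac{P_\mathcal{A} \rho^{\textrm{sep}} P_\mathcal{A}}{\operatorname{Tr}(P_\mathcal{A} \rho^{\textrm{sep}})}= \frac{P_\mathcal{A} \rho'^{\textrm{sep}} P_\mathcal{A}}{\operatorname{Tr}(P_\mathcal{A} \rho'^{\textrm{sep}})}$.
   Context: Two $d$-dimensional systems $A,B$ with $\mathcal{H}_{AB}=\mathbb{C}^d\otimes\mathbb{C}^d$. $V$ is the swap operator, $V\ket{\alpha}\ket{\beta}=\ket{\beta}\ket{\alpha}$. $P_\mathcal{A}=(\mathbb{1}-V)/2$ is the projector onto the antisymmetric subspace (with $\mathbb{1}$ the identity operator). A state is separable if it can be written as $\sum_k q_k |\alpha_k\rangle\langle\alpha_k|\otimes|\beta_k\rangle\langle\beta_k|$ with $q_k$ a probability distribution. *)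

(* Defs.v *)
From HB Require Import structures.
From mathcomp Require Import all_boot all_order all_algebra.
From mathcomp Require Import reals.
From mathcomp Require Import complex.
Set Implicit Arguments. Unset Strict Implicit. Unset Printing Implicit Defensive.
Import Order.TTheory GRing.Theory Num.Theory.
Local Open Scope ring_scope.

Section QInfo.
Variable R : realType.
Local Notation C := (R[i]).
Variable d : nat.

Definition adj m n (A : 'M[C]_(m, n)) : 'M[C]_(n, m) := (map_mx Num.conj A)^T.

Definition ketbra (a : 'cV[C]_d) : 'M[C]_d := a *m adj a.

Definition unit_vec (a : 'cV[C]_d) : Prop := (adj a *m a) 0 0 = 1.

(* Kronecker product on C^d (x) C^d; basis |i>|j> indexed by mxvec_index i j *)
Definition tens (A B : 'M[C]_d) : 'M[C]_(d * d) :=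
  \sum_(i < d) \sum_(j < d) \sum_(k < d) \sum_(l < d)
     (A i k * B j l) *: delta_mx (mxvec_index i j) (mxvec_index k l).

Definition swap_op : 'M[C]_(d * d) :=
  \sum_(i < d) \sum_(j < d) delta_mx (mxvec_index j i) (mxvec_index i j).

Definition PA : 'M[C]_(d * d) := 2^-1 *: (1%:M - swap_op).

Definition separable (rho : 'M[C]_(d * d)) : Prop :=
  exists (n : nat) (q : 'I_n -> C) (alpha beta : 'I_n -> 'cV[C]_d),
    [/\ forall k, 0 <= q k,
        \sum_k q k = 1,
        forall k, unit_vec (alpha k),
        forall k, unit_vec (beta k) &
        rho = \sum_k q k *: tens (ketbra (alpha k)) (ketbra (beta k))].
End QInfo.

(* Main.v *)
Require Import Defs.
From mathcomp Require Import all_boot all_order all_algebra.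
From mathcomp Require Import reals complex.
From mathcomp Require Import ring.
Import Order.TTheory GRing.Theory Num.Theory.
Local Open Scope ring_scope.
Set Implicit Arguments. Unset Strict Implicit.

Section H.
Variable R : realType.
Local Notation C := (R[i]).
Variable d : nat.

Lemma mxvec_index_eq (i j k l : 'I_d) :
  (mxvec_index i j == mxvec_index k l) = (i == k) && (j == l).
Proof.
apply/eqP/andP => [|[/eqP-> /eqP->]//].
rewrite /mxvec_index => /cast_ord_inj/enum_rank_inj [-> ->]; by [].
Qed.

Lemma adjD m n (A B : 'M[C]_(m, n)) : adj (A + B) = adj A + adj B.
Proof. by apply/matrixP=> i j; rewrite !mxE rmorphD. Qed.
Lemma adjN m n (A : 'M[C]_(m, n)) : adj (- A) = - adj A.
Proof. by apply/matrixP=> i j; rewrite !mxE rmorphN. Qed.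
Lemma adjB m n (A B : 'M[C]_(m, n)) : adj (A - B) = adj A - adj B.
Proof. by rewrite adjD adjN. Qed.
Lemma adjZ m n x (A : 'M[C]_(m, n)) : adj (x *: A) = x^* *: adj A.
Proof. by apply/matrixP=> i j; rewrite !mxE rmorphM. Qed.
Lemma adj_sum m n I (r : seq I) (P : pred I) (F : I -> 'M[C]_(m, n)) :
  adj (\sum_(k <- r | P k) F k) = \sum_(k <- r | P k) adj (F k).
Proof.
have adj0 : adj (0 : 'M[C]_(m, n)) = 0 by apply/matrixP=> i j; rewrite !mxE rmorph0.
exact: (big_morph _ (@adjD m n) adj0).
Qed.
Lemma adj_delta m n (i : 'I_m) (j : 'I_n) : adj (delta_mx i j : 'M[C]_(m,n)) = delta_mx j i.
Proof. by apply/matrixP=> a b; rewrite !mxE rmorph_nat andbC. Qed.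
Lemma adjM m n p (A : 'M[C]_(m, n)) (B : 'M[C]_(n, p)) : adj (A *m B) = adj B *m adj A.
Proof.
apply/matrixP=> i j; rewrite !mxE rmorph_sum; apply: eq_bigr => k _.
by rewrite !mxE rmorphM mulrC.
Qed.
Lemma adjK m n (A : 'M[C]_(m, n)) : adj (adj A) = A.
Proof. by apply/matrixP=> i j; rewrite !mxE conjCK. Qed.
Lemma adj1 n : adj (1%:M : 'M[C]_n) = 1%:M.
Proof. by apply/matrixP=> i j; rewrite !mxE rmorph_nat eq_sym. Qed.

Definition kv (a b : 'cV[C]_d) : 'cV[C]_(d * d) :=
  \sum_(i < d) \sum_(j < d) (a i 0 * b j 0) *: delta_mx (mxvec_index i j) 0.

Lemma kvD a b e : kv a (b + e) = kv a b + kv a e.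
Proof.
rewrite /kv -big_split; apply: eq_bigr => i _; rewrite -big_split; apply: eq_bigr => j _.
by rewrite mxE mulrDr scalerDl.
Qed.
Lemma kvZ a x b : kv a (x *: b) = x *: kv a b.
Proof.
rewrite /kv scaler_sumr; apply: eq_bigr => i _; rewrite scaler_sumr; apply: eq_bigr => j _.
by rewrite mxE scalerA mulrCA.
Qed.
Lemma kv0 a : kv a 0 = 0.
Proof. by rewrite -(scale0r (0 : 'cV[C]_d)) kvZ scale0r. Qed.

Lemma adj_kv a b : adj (kv a b) =
  \sum_(i < d) \sum_(j < d) (a i 0 * b j 0)^* *: delta_mx 0 (mxvec_index i j).
Proof.
rewrite /kv adj_sum; apply: eq_bigr => i _; rewrite adj_sum; apply: eq_bigr => j _.
by rewrite adjZ adj_delta.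
Qed.

Lemma tens_kv a b : tens (ketbra a) (ketbra b) = kv a b *m adj (kv a b).
Proof.
rewrite adj_kv /kv mulmx_suml /tens; apply: eq_bigr => i _.
rewrite mulmx_suml; apply: eq_bigr => j _.
rewrite mulmx_sumr; apply: eq_bigr => k _.
rewrite mulmx_sumr; apply: eq_bigr => l _.
rewrite -scalemxAl -scalemxAr mul_delta_mx scalerA !mxE !big_ord1 !mxE.
by rewrite rmorphM; congr (_ *: _); rewrite mulrACA.
Qed.

Lemma sum_sel (T : finType) (F : T -> C) p : \sum_i F i * (p == i)%:R = F p.
Proof.
rewrite (bigD1 p) //= eqxx mulr1 big1 ?addr0 // => i /negbTE.
by rewrite eq_sym => ->; rewrite mulr0.
Qed.

Lemma delta_mulE m n p (r : 'I_m) (s : 'I_n) (B : 'M[C]_(n, p)) x y :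
  (delta_mx r s *m B) x y = (x == r)%:R * B s y.
Proof.
rewrite mxE (eq_bigr (fun t => ((x == r)%:R * B t y) * (s == t)%:R)).
  by rewrite sum_sel.
move=> t _; rewrite mxE; by have [->|ne] := eqVneq t s; rewrite ?andbT ?andbF ?mulr1 ?mulr0 ?mul0r.
Qed.

Lemma kvE a b p q : kv a b (mxvec_index p q) 0 = a p 0 * b q 0.
Proof.
rewrite /kv summxE (eq_bigr (fun i => a i 0 * (p == i)%:R * b q 0)).
  by rewrite -mulr_suml sum_sel.
move=> i _; rewrite summxE (eq_bigr (fun j => (a i 0 * (p == i)%:R * b j 0) * (q == j)%:R)).
  by rewrite sum_sel.
move=> j _; rewrite !mxE mxvec_index_eq andbT.
by case: (p == i); case: (q == j); rewrite ?mulr1 ?mulr0 ?mul0r.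
Qed.

Definition ip n (a b : 'cV[C]_n) : C := (adj a *m b) 0 0.
Arguments ip {n}.

Lemma ip_kv a b c e : ip (kv a b) (kv c e) = ip a c * ip b e.
Proof.
rewrite /ip adj_kv mulmx_suml summxE /= !mxE big_distrlr /=; apply: eq_bigr => i _.
rewrite mulmx_suml summxE; apply: eq_bigr => j _.
rewrite -scalemxAl mxE delta_mulE kvE !mxE rmorphM.
by rewrite mul1r mulrACA.
Qed.

Lemma ip_conj n (a b : 'cV[C]_n) : ip b a = (ip a b)^*.
Proof.
rewrite /ip !mxE rmorph_sum; apply: eq_bigr => i _.
by rewrite !mxE rmorphM mulrC; congr (_ * _); rewrite /= conjCK.
Qed.

Lemma swap_kv a b : swap_op R d *m kv a b = kv b a.
Proof.
rewrite /swap_op exchange_big mulmx_suml [kv b a]/kv; apply: eq_bigr => j _.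
rewrite mulmx_suml; apply: eq_bigr => i _.
apply/matrixP => x y; rewrite delta_mulE (ord1 y) kvE !mxE eqxx andbT.
by rewrite mulrC [b j 0 * _]mulrC.
Qed.

Lemma adj_swap : adj (swap_op R d) = swap_op R d.
Proof.
rewrite /swap_op adj_sum exchange_big; apply: eq_bigr => i _.
rewrite adj_sum; apply: eq_bigr => j _; by rewrite adj_delta.
Qed.

Lemma adj_PA : adj (PA R d) = PA R d.
Proof.
rewrite /PA adjZ adjB adj1 adj_swap; congr (_ *: _).
by rewrite fmorphV rmorph_nat.
Qed.

Lemma PA_kv a b : PA R d *m kv a b = 2^-1 *: (kv a b - kv b a).
Proof. by rewrite /PA -scalemxAl mulmxBl mul1mx swap_kv. Qed.

Lemma trPA_T a b : \tr (PA R d *m tens (ketbra a) (ketbra b)) =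
   2^-1 * (ip a a * ip b b - ip a b * ip b a).
Proof.
rewrite tens_kv mulmxA mxtrace_mulC /mxtrace big_ord1 mulmxA.
rewrite -mulmxA PA_kv -scalemxAr mxE.
have -> : forall (u v w : 'cV[C]_(d*d)), (adj u *m (v - w)) 0 0 = ip u v - ip u w.
  by move=> u v w; rewrite mulmxBr /ip !mxE.
by rewrite (ip_kv a b a b) (ip_kv a b b a).
Qed.

Lemma PA_T_PA a b : PA R d *m tens (ketbra a) (ketbra b) *m PA R d =
   (PA R d *m kv a b) *m adj (PA R d *m kv a b).
Proof. by rewrite tens_kv adjM adj_PA !mulmxA. Qed.


Lemma ipDl n (a b e : 'cV[C]_n) : ip (a + b) e = ip a e + ip b e.
Proof. by rewrite /ip adjD mulmxDl mxE. Qed.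
Lemma ipDr n (a b e : 'cV[C]_n) : ip e (a + b) = ip e a + ip e b.
Proof. by rewrite /ip mulmxDr mxE. Qed.
Lemma ipNl n (a e : 'cV[C]_n) : ip (- a) e = - ip a e.
Proof. by rewrite /ip adjN mulNmx mxE. Qed.
Lemma ipNr n (a e : 'cV[C]_n) : ip e (- a) = - ip e a.
Proof. by rewrite /ip mulmxN mxE. Qed.
Lemma ipZl n x (a e : 'cV[C]_n) : ip (x *: a) e = x^* * ip a e.
Proof. by rewrite /ip adjZ -scalemxAl mxE. Qed.
Lemma ipZr n x (a e : 'cV[C]_n) : ip e (x *: a) = x * ip e a.
Proof. by rewrite /ip -scalemxAr mxE. Qed.

Lemma ip_ge0 n (a : 'cV[C]_n) : 0 <= ip a a.
Proof. by rewrite /ip mxE sumr_ge0 // => i _; rewrite !mxE mulrC mul_conjC_ge0. Qed.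

Lemma ip_eq0 n (a : 'cV[C]_n) : ip a a = 0 -> a = 0.
Proof.
rewrite /ip mxE => /psumr_eq0P H; apply/matrixP => i j; rewrite (ord1 j) mxE.
have H0 : forall k : 'I_n, true -> 0 <= adj a 0 k * a k 0.
  by move=> k _; rewrite !mxE mulrC mul_conjC_ge0.
by have := H H0 i isT; rewrite !mxE mulrC => /eqP; rewrite mul_conjC_eq0 => /eqP ->.
Qed.

Lemma tr_sum n m (F : 'I_m -> 'M[C]_n) : \tr (\sum_k F k) = \sum_k \tr (F k).
Proof. exact: (big_morph _ (@mxtraceD _ _) (mxtrace0 _ _)). Qed.

Lemma PA_sum_PA m (x : 'I_m -> C) (M : 'I_m -> 'M[C]_(d * d)) :
  PA R d *m (\sum_k x k *: M k) *m PA R d = \sum_k x k *: (PA R d *m M k *m PA R d).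
Proof.
rewrite mulmx_sumr mulmx_suml; apply: eq_bigr => k _.
by rewrite -(scalemxAr (x k) (PA R d)) -(scalemxAl (x k) (PA R d *m M k)).
Qed.

End H.

Lemma final_eq (R : realType) m (x y N : R[i]) (A B : 'M[R[i]]_m) :
  x = 2^-1 * N -> y = 2^-1 -> N != 0 -> A = N *: B -> x^-1 *: A = y^-1 *: B.
Proof. by move=> -> -> NE ->; rewrite scalerA; congr (_ *: _); field. Qed.

Theorem lemma1 (R : realType) (d : nat) (rho : 'M[R[i]]_(d * d)) :
  separable rho ->
  0 < \tr (PA R d *m rho) ->
  exists rho' : 'M[R[i]]_(d * d),
    [/\ separable rho',
        \tr (PA R d *m rho') = 2^-1 &
        (\tr (PA R d *m rho))^-1 *: (PA R d *m rho *m PA R d) =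
        (\tr (PA R d *m rho'))^-1 *: (PA R d *m rho' *m PA R d)].
Proof.
move=> [n [q [al [be [q0 qs ua ub ->]]]]] htr.
pose c := fun k => ip (al k) (be k).
pose w := fun k => be k - c k *: al k.
pose n2 := fun k => ip (w k) (w k).
pose g := fun k => if n2 k == 0 then be k else (sqrtC (n2 k))^-1 *: w k.
pose T := fun k => tens (ketbra (al k)) (ketbra (be k)).
pose T' := fun k => tens (ketbra (al k)) (ketbra (g k)).
have ua' : forall k, ip (al k) (al k) = 1 by [].
have ub' : forall k, ip (be k) (be k) = 1 by [].
have n2E : forall k, n2 k = 1 - c k * (c k)^*.
  move=> k; rewrite /n2 /w !(ipDl, ipDr, ipNl, ipNr, ipZl, ipZr) ua' ub'.
  rewrite (ip_conj (al k) (be k)) -/(c k); ring.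
have n2ge0 : forall k, 0 <= n2 k by move=> k; apply: ip_ge0.
have trT : forall k, \tr (PA R d *m T k) = 2^-1 * n2 k.
  by move=> k; rewrite /T trPA_T ua' ub' mulr1 (ip_conj (al k) (be k)) n2E.
have key : forall k, PA R d *m kv (al k) (be k) = PA R d *m kv (al k) (w k).
  move=> k; have -> : be k = c k *: al k + w k by rewrite /w /= addrCA subrr addr0.
  rewrite kvD kvZ mulmxDr -(scalemxAr (c k) (PA R d)) (PA_kv (al k) (al k)).
  by rewrite subrr scaler0 scaler0 add0r.
have facts : forall k, [/\ PA R d *m T k *m PA R d = n2 k *: (PA R d *m T' k *m PA R d),
    n2 k * \tr (PA R d *m T' k) = 2^-1 * n2 k & unit_vec (g k)].
  move=> k; rewrite /T /T' !PA_T_PA key /g.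
  have [e0|ne0] := eqVneq (n2 k) 0.
    have w0 : w k = 0 by apply: ip_eq0.
    by rewrite e0 w0 kv0 mulmx0 mul0mx scale0r mul0r mulr0; split => //; apply: ub.
  set s := sqrtC (n2 k).
  have s0 : s != 0 by rewrite sqrtC_eq0.
  have sc : s^* = s by apply: geC0_conj; rewrite sqrtC_ge0.
  have sci : s^-1^* = s^-1 by apply: geC0_conj; rewrite invr_ge0 sqrtC_ge0.
  have ss : s * s = n2 k by rewrite -expr2 sqrtCK.
  have wE : w k = s *: (s^-1 *: w k) by rewrite scalerA divff // scale1r.
  split.
  - rewrite [in LHS]wE kvZ -scalemxAr adjZ -scalemxAr -scalemxAl scalerA sc ss.
    by [].
  - rewrite trPA_T ua' (ip_conj (al k) (s^-1 *: w k)) !ipZr ipZl.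
    have -> : ip (al k) (w k) = 0.
      by rewrite /w ipDr ipNr ipZr ua' mulr1 subrr.
    rewrite ?mulr0 ?rmorph0 ?mulr0 ?mul0r subr0 mul1r sci -/(n2 k) -ss.
    by field.
  - rewrite /unit_vec -/(ip _ _) ipZl ipZr sci -/(n2 k) -ss.
    by field.
pose N := \sum_k q k * n2 k.
have trrho : \tr (PA R d *m \sum_k q k *: T k) = 2^-1 * N.
  rewrite mulmx_sumr tr_sum /N mulr_sumr; apply: eq_bigr => k _.
  by rewrite -scalemxAr mxtraceZ trT mulrCA.
have Npos : 0 < N.
  by move: htr; rewrite -/(T _) trrho pmulr_rgt0 // invr_gt0 ltr0n.
have NE : N != 0 by rewrite lt0r_neq0.
have -> : \sum_k q k *: tens (ketbra (al k)) (ketbra (be k)) = \sum_k q k *: T k by reflexivity.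
exists (\sum_k (q k * n2 k / N) *: T' k).
have trr' : \tr (PA R d *m \sum_k (q k * n2 k / N) *: T' k) = 2^-1.
  rewrite mulmx_sumr tr_sum (eq_bigr (fun k => q k * n2 k * (2^-1 / N))).
    by rewrite -mulr_suml -/N; field.
  move=> k _; rewrite -scalemxAr mxtraceZ; have [f1 f2 f3] := facts k.
  have -> : q k * n2 k / N * \tr (PA R d *m T' k) = q k / N * (n2 k * \tr (PA R d *m T' k)).
    by field.
  by rewrite f2; field.
split.
- exists n, (fun k => q k * n2 k / N), al, g; split => //.
  + move=> k; apply: divr_ge0; [exact: mulr_ge0 | exact: ltW].
  + by rewrite -mulr_suml -/N divff.
  + by move=> k; have [] := facts k.
- exact: trr'.
apply: (final_eq trrho trr' NE).
rewrite (PA_sum_PA q T) (PA_sum_PA (fun k => q k * n2 k / N) T') scaler_sumr.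
apply: eq_bigr => k _; have [f1 f2 f3] := facts k.
by rewrite f1 !scalerA; congr (_ *: _); field.
Qed.
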